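(* Let $n$ be odd. For the Erdős–Rényi random graph $\mathcal{G}(n,p)$, there exists $0<p_0<1$ such that $W_2(p)\geq 0.5$ for all $p\geq p_0$, where $W_2(p)$ is the probability that $\mathcal{G}(n,p)$ is a $\mathcal{P}$ position for Grim.
   Context: Grim is a two-player game on a finite simple undirected graph. Any isolated vertices of the starting graph are deleted before play begins. Players alternate moves; a move consists of selecting a vertex of the current graph and deleting it together with all its incident edges, after which every vertex that has become isolated is also deleted. The player who makes the last legal move wins (a player facing the empty graph has no move and loses; the empty graph is a $\mathcal{P}$ position). A graph is an $\mathcal{N}$ position if the player about to move has a winning strategy, and a $\mathcal{P}$ position otherwise. $\mathcal{G}(n,p)$ is the random graph on $n$ labeled vertices in which each of the $\binom{n}{2}$ possible edges is present independently with probability $p$; thus $W_2(p)=\sum_{G} p^{|E(G)|}(1-p)^{\binom n2-|E(G)|}$, the sum over all graphs $G$ on the $n$ labeled vertices that are $\mathcal{P}$ positions. *)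

(* Defs.v *)
From HB Require Import structures.
From mathcomp Require Import all_boot all_order all_algebra.
From mathcomp Require Import reals.
Set Implicit Arguments. Unset Strict Implicit. Unset Printing Implicit Defensive.
Import Order.TTheory GRing.Theory Num.Theory.

(* Since isolated vertices are
   deleted in Grim, a Grim position is determined by its edge set alone: the
   vertex set of the current graph is the set of endpoints of its edges. *)

Definition is_graph n (E : {set {set 'I_n}}) : bool :=
  [forall e in E, #|e| == 2].

Definition gverts n (E : {set {set 'I_n}}) : {set 'I_n} :=
  \bigcup_(e in E) e.

Definition grim_move n (E : {set {set 'I_n}}) (v : 'I_n) : {set {set 'I_n}} :=
  [set e in E | v \notin e].

(* N-position with a fuel parameter; each move deletes at least one edge, so
   fuel #|E| is enough to compute the exact game value. *)
Fixpoint grimN_fuel n (k : nat) (E : {set {set 'I_n}}) : bool :=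
  if k is k'.+1 then
    [exists v, (v \in gverts E) && ~~ grimN_fuel k' (grim_move E v)]
  else false.

Definition grimN n (E : {set {set 'I_n}}) : bool := grimN_fuel #|E| E.
Definition grimP n (E : {set {set 'I_n}}) : bool := ~~ grimN E.

Local Open Scope ring_scope.

Definition W2 (R : realType) (n : nat) (p : R) : R :=
  \sum_(E : {set {set 'I_n}} | is_graph E && grimP E)
     p ^+ #|E| * (1 - p) ^+ ('C(n, 2) - #|E|)%N.

(* Main.v *)
Require Import Defs.
From mathcomp Require Import all_boot all_order all_algebra.
From mathcomp Require Import reals.
From mathcomp Require Import zify lra.
Import Order.TTheory GRing.Theory Num.Theory.
Set Implicit Arguments. Unset Strict Implicit.

Definition KS {n} (S : {set 'I_n}) : {set {set 'I_n}} :=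
  [set e : {set 'I_n} | (e \subset S) && (#|e| == 2)].

Lemma gverts_KS n (S : {set 'I_n}) v :
  (v \in gverts (KS S)) = (2 <= #|S|) && (v \in S).
Proof.
apply/bigcupP/andP.
- move=> [e]; rewrite inE => /andP[eS /eqP e2] ve; split.
    by rewrite -e2 subset_leq_card.
  exact: (subsetP eS).
- move=> [S2 vS].
  have : 0 < #|S :\ v| by rewrite (cardsD1 v S) vS in S2; lia.
  move/card_gt0P=> [w]; rewrite !inE => /andP[wv wS].
  exists [set v; w]; last by rewrite !inE eqxx.
  have vw : v != w by rewrite eq_sym.
  rewrite inE cards2 vw andbT.
  by apply/subsetP=> x; rewrite !inE => /orP[]/eqP->.
Qed.

Lemma move_KS n (S : {set 'I_n}) v : grim_move (KS S) v = KS (S :\ v).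
Proof.
apply/setP=> e; rewrite !inE subsetD1.
by case: (e \subset S); case: (#|e| == 2); case: (v \in e).
Qed.

Lemma cardD1S n (S : {set 'I_n}) v : v \in S -> #|S| = (#|S :\ v|).+1.
Proof. by move=> vS; rewrite (cardsD1 v S) vS. Qed.

Lemma grimN_KS n k : forall (S : {set 'I_n}), #|S| <= k.+1 ->
  grimN_fuel k (KS S) = (2 <= #|S|) && ~~ odd #|S|.
Proof.
elim: k => [|k IH] S hS /=.
  by have /negbTE -> : ~~ (2 <= #|S|) by rewrite -ltnNge.
apply/existsP; case: ifP.
- move=> /andP[S2 ev].
  have : 0 < #|S| by apply: leq_trans S2.
  move/card_gt0P=> [v vS]; exists v.
  have e := cardD1S vS.
  rewrite gverts_KS S2 vS move_KS IH; last by rewrite -ltnS -e.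
  rewrite e /= in S2 ev.
  by move: S2 ev; case: (#|S :\ v|) => [|[|m]] //= _; rewrite negbK.
- move=> H [v /andP[]]; rewrite gverts_KS => /andP[S2 vS].
  have e := cardD1S vS.
  rewrite move_KS IH; last by rewrite -ltnS -e.
  move: H; rewrite S2 /= e /= negbK => hx.
  rewrite e in S2; move: S2 hx; case: (#|S :\ v|) => [|[|m]] //= _.
  by move=> ->.
Qed.

Lemma card_KST n : #|KS [set: 'I_n]| = 'C(n, 2).
Proof.
rewrite -[in RHS](card_ord n) -card_draws; congr #|pred_of_set _|.
by apply/setP=> e; rewrite !inE subsetT.
Qed.

Lemma bin2_ge n : n <= ('C(n, 2)).+1.
Proof. case: n => [|n] //; rewrite binS bin1; lia. Qed.

Local Open Scope ring_scope.

Lemma bernoulli (R : realType) (p : R) m : 0 <= p -> p <= 1 ->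
  1 - m%:R * (1 - p) <= p ^+ m.
Proof.
move=> p0 p1; elim: m => [|m IH]; first by rewrite mul0r subr0 expr0.
rewrite exprS -natr1.
have h : p * (1 - m%:R * (1 - p)) <= p * p ^+ m by apply: ler_wpM2l.
have m0 : 0 <= (m%:R : R) by apply: ler0n.
have hh : 0 <= (m%:R : R) * ((1 - p) * (1 - p)) by apply: mulr_ge0 => //; nra.
nra.
Qed.

Theorem theorem6p4 (R : realType) (n : nat) (hn : odd n) :
  exists p0 : R, 0 < p0 < 1 /\
    forall p : R, p0 <= p -> p <= 1 -> 2^-1 <= W2 n p.
Proof.
set m := 'C(n, 2).
set d : R := (m.+1)%:R * 2.
have d0 : 0 < d by rewrite /d mulr_gt0 // ltr0n.
set q := d^-1.
have q0 : 0 < q by rewrite invr_gt0.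
have qd : q * d = 1 by rewrite mulVf // lt0r_neq0.
have m0 : 0 <= (m%:R : R) by apply: ler0n.
have dE : d = (m%:R + 1) * 2 by rewrite /d -natr1.
have h2 : (2 : R)^-1 * 2 = 1 by rewrite mulVf // pnatr_eq0.
have qm : 0 <= q * m%:R by apply: mulr_ge0 => //; apply: ltW.
exists (1 - q); split.
  apply/andP; split; nra.
move=> p hp p1.
have p0 : 0 <= p by nra.
have hb := bernoulli m p0 p1.
have hm : (m%:R : R) * (1 - p) <= m%:R * q by apply: ler_wpM2l => //; lra.
have key : 2^-1 <= p ^+ m by nra.
apply: (le_trans key).
have KP : is_graph (KS [set: 'I_n]) && grimP (KS [set: 'I_n]).
  apply/andP; split.
    by apply/forallP=> e; apply/implyP; rewrite inE => /andP[_].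
  rewrite /grimP /grimN grimN_KS; last by rewrite cardsT card_ord card_KST bin2_ge.
  by rewrite cardsT card_ord hn andbF.
rewrite /W2 (bigD1 (KS [set: 'I_n])) //= card_KST subnn expr0 mulr1.
rewrite lerDl; apply: sumr_ge0 => E _.
by apply: mulr_ge0; apply: exprn_ge0; lra.
Qed.
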